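(* Let $G$ be a group, let $\mathbb{F}$ be a field, and let $(W,V,\mu)$ be a partial $G$-algebra over $\mathbb{F}$. Let $Y\subseteq W$ be a $G$-invariant subset. Then there exists a unique smallest $G$-submodule $W(Y)$ of $W$ such that \[ W(Y)=\langle Y\rangle+\mu\big(S^2(W(Y)\cap V)\big), \] where $\langle Y\rangle$ denotes the $\mathbb{F}$-linear span of $Y$.
   Context: A partial $G$-algebra is a triple $(W,V,\mu)$ where $W$ is an $\mathbb{F}G$-module, $V\subseteq W$ is a $G$-submodule, and $\mu\colon S^2(V)\to W$ is a $G$-equivariant linear map from the symmetric square of $V$ to $W$. For a subspace $U\subseteq V$, $S^2(U)$ is regarded as a subspace of $S^2(V)$, and $\mu(S^2(U))$ denotes its image under $\mu$. *)

(* Defs.v *)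
From mathcomp Require Import all_boot all_order all_algebra.
Set Implicit Arguments. Unset Strict Implicit. Unset Printing Implicit Defensive.
Import GRing.Theory.
Local Open Scope ring_scope.

Record AbsGroup := {
  gcar :> Type;
  gmul : gcar -> gcar -> gcar;
  gone : gcar;
  ginv : gcar -> gcar;
  gmulA : forall x y z, gmul x (gmul y z) = gmul (gmul x y) z;
  gmul1 : forall x, gmul gone x = x;
  gmulV : forall x, gmul (ginv x) x = gone
}.

Definition subset_of (T : Type) (A B : T -> Prop) := forall x, A x -> B x.

Definition is_subspace (F : fieldType) (W : lmodType F) (S : W -> Prop) :=
  [/\ S 0, (forall x y, S x -> S y -> S (x + y)) &
      (forall (a : F) x, S x -> S (a *: x))].

Definition span (F : fieldType) (W : lmodType F) (Y : W -> Prop) : W -> Prop :=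
  fun w => forall S : W -> Prop, is_subspace S -> subset_of Y S -> S w.

Definition sum_set (F : fieldType) (W : lmodType F) (A B : W -> Prop) : W -> Prop :=
  fun w => exists a b, A a /\ B b /\ w = a + b.

(* The G-equivariant linear map
   mu : S^2(V) -> W is represented (by the universal property of the
   symmetric square) by the symmetric F-bilinear G-equivariant map
   V x V -> W, (u, v) |-> mu(u v); its values outside V x V are irrelevant. *)
Record partial_G_algebra (G : AbsGroup) (F : fieldType) := {
  PW : lmodType F;
  act : G -> PW -> PW;
  act_add : forall g x y, act g (x + y) = act g x + act g y;
  act_scale : forall g (a : F) x, act g (a *: x) = a *: act g x;
  act_one : forall x, act (gone G) x = x;
  act_mul : forall g h x, act (gmul g h) x = act g (act h x);
  PV : PW -> Prop;
  PV_subspace : is_subspace PV;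
  PV_stable : forall g v, PV v -> PV (act g v);
  mu : PW -> PW -> PW;
  mu_sym : forall u v, PV u -> PV v -> mu u v = mu v u;
  mu_addl : forall u u' v, PV u -> PV u' -> PV v -> mu (u + u') v = mu u v + mu u' v;
  mu_scalel : forall (a : F) u v, PV u -> PV v -> mu (a *: u) v = a *: mu u v;
  mu_equiv : forall g u v, PV u -> PV v -> mu (act g u) (act g v) = act g (mu u v)
}.
Arguments act {G F} p g x.
Arguments PV {G F} p x.
Arguments mu {G F} p x y.

Definition is_G_submodule G F (A : partial_G_algebra G F) (S : PW A -> Prop) :=
  is_subspace S /\ forall g x, S x -> S (act A g x).

(* mu(S^2(U)) for U a subset of V: the span of {mu(u v) | u, v in U}
   (S^2(U) is spanned by the products u v, u, v in U). *)
Definition mu_S2 G F (A : partial_G_algebra G F) (U : PW A -> Prop) : PW A -> Prop :=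
  span (fun w => exists u v, U u /\ U v /\ w = mu A u v).

Arguments mu_S2 {G F} A U _.

Definition WY_eq G F (A : partial_G_algebra G F) (Y M : PW A -> Prop) :=
  forall w, M w <-> sum_set (span Y) (mu_S2 A (fun x => M x /\ PV A x)) w.

(* Main.v *)
Require Import Defs.
From mathcomp Require Import all_boot all_order all_algebra.
Set Implicit Arguments. Unset Strict Implicit.
Import GRing.Theory.
Local Open Scope ring_scope.
Local Notation span := Defs.span.

Section Aux.
Variables (F : fieldType) (W : lmodType F).

Lemma span_in (Y : W -> Prop) x : Y x -> span Y x.
Proof. by move=> Yx S _ HS; apply: HS. Qed.

Lemma span_sub (Y S : W -> Prop) : is_subspace S -> subset_of Y S -> subset_of (span Y) S.
Proof. by move=> HS HYS x Hx; apply: Hx. Qed.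

Lemma span_subspace (Y : W -> Prop) : is_subspace (span Y).
Proof.
split.
- by move=> S [H0 _ _] _.
- by move=> x y Hx Hy S HS HYS; case: (HS) => _ Hadd _; apply: Hadd; [apply: Hx|apply: Hy].
- by move=> a x Hx S HS HYS; case: (HS) => _ _ Hsc; apply: Hsc; apply: Hx.
Qed.

Lemma span_mono (Y Z : W -> Prop) : subset_of Y Z -> subset_of (span Y) (span Z).
Proof.
move=> HYZ; apply: span_sub; first exact: span_subspace.
by move=> x Hx; apply: span_in; apply: HYZ.
Qed.

Lemma sum_subspace (A B : W -> Prop) : is_subspace A -> is_subspace B -> is_subspace (sum_set A B).
Proof.
move=> [A0 AD AZ] [B0 BD BZ]; split.
- by exists 0, 0; rewrite addr0.
- move=> x y [a [b [Ha [Hb ->]]]] [a' [b' [Ha' [Hb' ->]]]].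
  exists (a + a'), (b + b'); do 2 (split; first by auto).
  by rewrite addrACA.
- move=> c x [a [b [Ha [Hb ->]]]]; exists (c *: a), (c *: b).
  by do 2 (split; first by auto); rewrite scalerDr.
Qed.

Lemma sum_mono (A B A' B' : W -> Prop) : subset_of A A' -> subset_of B B' ->
  subset_of (sum_set A B) (sum_set A' B').
Proof. by move=> HA HB x [a [b [Ha [Hb ->]]]]; exists a, b; auto. Qed.

Lemma sum_r (A B : W -> Prop) : is_subspace A -> subset_of B (sum_set A B).
Proof. by move=> [A0 _ _] x Hx; exists 0, x; rewrite add0r. Qed.

Lemma sum_l (A B : W -> Prop) : is_subspace B -> subset_of A (sum_set A B).
Proof. by move=> [B0 _ _] x Hx; exists x, 0; rewrite addr0. Qed.
End Aux.

Section Main.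
Variables (G : AbsGroup) (F : fieldType) (A : partial_G_algebra G F).

Lemma act0 g : act A g 0 = 0.
Proof. by have := @act_scale _ _ A g 0 0; rewrite !scale0r. Qed.

Lemma span_act (Y : PW A -> Prop) : (forall g y, Y y -> Y (act A g y)) ->
  forall g x, span Y x -> span Y (act A g x).
Proof.
move=> HY g x Hx.
have : subset_of (span Y) (fun w => span Y (act A g w)); last by apply.
apply: span_sub.
- have [S0 SD SZ] := span_subspace Y; split.
  + by rewrite act0.
  + by move=> u v Hu Hv; rewrite act_add; apply: SD.
  + by move=> a u Hu; rewrite act_scale; apply: SZ.
- by move=> y Hy; apply: span_in; apply: HY.
Qed.

Definition Phi (Y N : PW A -> Prop) := sum_set (span Y) (mu_S2 A (fun x => N x /\ PV A x)).

Lemma Phi_mono Y N N' : subset_of N N' -> subset_of (Phi Y N) (Phi Y N').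
Proof.
move=> H; apply: sum_mono => //; apply: span_mono.
by move=> w [u [v [[Hu Pu] [[Hv Pv] ->]]]]; exists u, v; auto.
Qed.

Lemma Phi_subspace Y N : is_subspace (Phi Y N).
Proof. by apply: sum_subspace; apply: span_subspace. Qed.

Lemma Phi_G Y N : (forall g y, Y y -> Y (act A g y)) -> is_G_submodule N ->
  is_G_submodule (Phi Y N).
Proof.
move=> HY [_ HN]; split; first exact: Phi_subspace.
move=> g x [a [b [Ha [Hb ->]]]]; exists (act A g a), (act A g b).
split; first exact: span_act.
split; last by rewrite act_add.
apply: span_act => //.
move=> h w [u [v [[Hu Pu] [[Hv Pv] ->]]]].
exists (act A h u), (act A h v); rewrite mu_equiv //.
by split; [split; [apply: HN | apply: PV_stable]|split; [split; [apply: HN|apply: PV_stable]|]].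
Qed.

End Main.

Theorem lemma5p2 (G : AbsGroup) (F : fieldType) (A : partial_G_algebra G F)
  (Y : PW A -> Prop) (HY : forall g y, Y y -> Y (act A g y)) :
  exists M : PW A -> Prop,
    [/\ is_G_submodule M, WY_eq Y M,
        (forall N, is_G_submodule N -> WY_eq Y N -> subset_of M N) &
        (forall M', is_G_submodule M' -> WY_eq Y M' ->
           (forall N, is_G_submodule N -> WY_eq Y N -> subset_of M' N) ->
           forall w, M' w <-> M w)].
Proof.
pose M := fun w => forall N, is_G_submodule N -> subset_of (Phi Y N) N -> N w.
have MG : is_G_submodule M.
  split; first split.
  - by move=> N [[N0 _ _] _] _.
  - by move=> x y Hx Hy N HN HP; case: (HN) => [[_ ND _] _]; apply: ND; [apply: Hx|apply: Hy].
  - by move=> a x Hx N HN HP; case: (HN) => [[_ _ NZ] _]; apply: NZ; apply: Hx.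
  - by move=> g x Hx N HN HP; case: (HN) => _ NG; apply: NG; apply: Hx.
have PM : subset_of (Phi Y M) M.
  move=> x Hx N HN HP; apply: (HP); apply: (Phi_mono (N := M)) => //.
  by move=> w Hw; exact: (Hw N HN HP).
have MP : subset_of M (Phi Y M).
  move=> x Hx; apply: Hx; first exact: Phi_G.
  by apply: Phi_mono.
have Mmin : forall N, is_G_submodule N -> WY_eq Y N -> subset_of M N.
  move=> N HN HW x Hx; apply: Hx => // w Hw; exact/HW.
exists M; split => //.
- by move=> w; split; [apply: MP | apply: PM].
- move=> M' HM' HW' Hmin w; split.
  + by apply: Hmin => // v; split; [apply: MP | apply: PM].
  + by apply: Mmin.
Qed.
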